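(* Let $\mathcal{T}$ be a smooth manifold with local coordinates $(t^a)$ carrying a Riemannian metric $h_{ab}(t)$ with Christoffel symbols $\chi^a_{bc}(t)$, and let $M$ be a smooth $n$-dimensional manifold with local coordinates $(x^i)$ carrying a semi-Riemannian metric $\varphi_{ij}(x)$ with Christoffel symbols $\gamma^k_{ij}(x)$. Let $m\neq0$, $e$ be real constants and $A^{(a)}_{(i)}(t,x)$ a smooth d-tensor on $\mathcal{T}\times M$. On $E^*=J^{1*}(\mathcal{T},M)$, with coordinates $(t^a,x^i,p^a_i)$, let $\frac{\delta}{\delta t^a}=\frac{\partial}{\partial t^a}-\chi^f_{ag}p^g_r\frac{\partial}{\partial p^f_r}$ and $\frac{\delta}{\delta x^i}=\frac{\partial}{\partial x^i}-\underset{2}{N}{}^{(f)}_{(r)i}\frac{\partial}{\partial p^f_r}$ with $\underset{2}{N}{}^{(f)}_{(r)i}=\gamma^s_{ri}\big[\frac{2e}{m}A^{(f)}_{(s)}-p^f_s\big]-\frac{e}{m}\big[\frac{\partial A^{(f)}_{(r)}}{\partial x^i}+\frac{\partial A^{(f)}_{(i)}}{\partial x^r}\big]$. Let $D$ be the linear connection on $E^*$ defined on the adapted frame $\{\frac{\delta}{\delta t^a},\frac{\delta}{\delta x^i},\frac{\partial}{\partial p^a_i}\}$ by \[ D_{\frac{\delta}{\delta t^c}}\tfrac{\delta}{\delta t^b}=\chi^a_{bc}\tfrac{\delta}{\delta t^a},\quad D_{\frac{\delta}{\delta t^c}}\tfrac{\delta}{\delta x^j}=0,\quad D_{\frac{\delta}{\delta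 t^c}}\tfrac{\partial}{\partial p^f_j}=\chi^b_{fc}\tfrac{\partial}{\partial p^b_j}, \] \[ D_{\frac{\delta}{\delta x^k}}\tfrac{\delta}{\delta t^b}=0,\quad D_{\frac{\delta}{\delta x^k}}\tfrac{\delta}{\delta x^j}=\gamma^i_{jk}\tfrac{\delta}{\delta x^i},\quad D_{\frac{\delta}{\delta x^k}}\tfrac{\partial}{\partial p^b_s}=-\gamma^s_{ik}\tfrac{\partial}{\partial p^b_i}, \] and $D_{\frac{\partial}{\partial p^c_k}}$ of every adapted frame vector equal to $0$. Let $R(X,Y)Z=D_XD_YZ-D_YD_XZ-D_{[X,Y]}Z$ and $\mathrm{Ric}(Y,Z)=\mathrm{tr}(X\mapsto R(X,Y)Z)$. Then the only (possibly) nonvanishing adapted components of $\mathrm{Ric}$ are \[ \mathrm{Ric}\big(\tfrac{\delta}{\delta t^a},\tfrac{\delta}{\delta t^b}\big)=\chi_{ab},\qquad \mathrm{Ric}\big(\tfrac{\delta}{\delta x^i},\tfrac{\delta}{\delta x^j}\big)=\mathfrak{R}_{ij}, \] where $\chi_{ab}(t)$ and $\mathfrak{R}_{ij}(x)$ are the classical Ricci tensors of $h_{ab}$ and $\varphi_{ij}$ (defined with the same curvature and trace conventions for their Levi-Civita connections); all adapted components of $\mathrm{Ric}$ involving a vertical vector $\frac{\partial}{\partial p^a_i}$ or mixing $\frac{\delta}{\delta t^a}$ with $\frac{\delta}{\delta x^i}$ vanish.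
   Context: Indices $a,b,c,d,f,g$ run from $1$ to $\dim\mathcal{T}$, indices $i,j,k,r,s$ from $1$ to $n$; Einstein summation convention. The fibre coordinates of $J^{1*}(\mathcal{T},M)$ transform as $\tilde p^a_i=\frac{\partial \tilde t^a}{\partial t^b}\frac{\partial x^j}{\partial \tilde x^i}p^b_j$. The connection $D$ is the one the paper calls the generalized Cartan canonical connection $C\Gamma(N)=(\chi^a_{bc},0,\gamma^i_{jk},0)$ of the autonomous multi-time Hamilton space of electrodynamics, and $\mathrm{Ric}$ is its Ricci tensor. *)

(* Defs.v *)
From HB Require Import structures.
From mathcomp Require Import all_boot all_order all_algebra.
From mathcomp Require Import all_classical all_reals all_analysis.
Set Implicit Arguments. Unset Strict Implicit. Unset Printing Implicit Defensive.
Import Order.TTheory GRing.Theory Num.Theory.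
Import numFieldNormedType.Exports.
Local Open Scope classical_set_scope.
Local Open Scope ring_scope.

Section Generic.
Variable R : realType.

Section Smooth.
Variable V : normedModType R.
Fixpoint Ck (k : nat) (U : set V) (f : V -> R) : Prop :=
  match k with
  | 0 => forall x, U x -> {for x, continuous f}
  | k'.+1 => (forall x, U x -> differentiable f x) /\
             (forall v : V, Ck k' U (fun x => derive f x v))
  end.
Definition smooth_on (U : set V) (f : V -> R) := forall k, Ck k U f.
End Smooth.

(* E : frame of vector fields, th : dual coframe (th i x v = i-th component of
   v in the frame at x), G a b c = coefficient: D_{E c} (E b) = sum_a G a b c E a.
   The connection is extended to arbitrary vector fields by C^oo-linearity in
   the direction and the Leibniz rule. *)
Section Connection.
Variables (V : normedModType R) (I : finType).
Variables (E : I -> V -> V) (th : I -> V -> V -> R) (G : I -> I -> I -> V -> R).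

Definition vact (X : V -> V) (g : V -> R) : V -> R := fun x => derive g x (X x).

Definition cov (X Z : V -> V) : V -> V := fun x =>
  \sum_c th c x (X x) *:
    \sum_b (vact (E c) (fun y => th b y (Z y)) x *: E b x
            + th b x (Z x) *: \sum_a G a b c x *: E a x).

Definition lie (X Y : V -> V) : V -> V := fun x =>
  derive Y x (X x) - derive X x (Y x).

Definition curv (X Y Z : V -> V) : V -> V := fun x =>
  cov X (cov Y Z) x - cov Y (cov X Z) x - cov (lie X Y) Z x.

Definition ric (Y Z : V -> V) : V -> R := fun x =>
  \sum_a th a x (curv (E a) Y Z x).
End Connection.

Definition deltar (n : nat) (i : 'I_n) : 'rV[R]_n := delta_mx 0 i.

Definition pd (n : nat) (f : 'rV[R]_n -> R) (i : 'I_n) (x : 'rV[R]_n) : R :=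
  derive f x (deltar i).

Definition chris (n : nat) (g : 'rV[R]_n -> 'M[R]_n) (a b c : 'I_n)
    (x : 'rV[R]_n) : R :=
  2^-1 * \sum_d (invmx (g x)) a d *
     (pd (fun y => g y d c) b x + pd (fun y => g y d b) c x
      - pd (fun y => g y b c) d x).

Definition coordE (n : nat) (i : 'I_n) : 'rV[R]_n -> 'rV[R]_n := fun _ => deltar i.
Definition coordTh (n : nat) (i : 'I_n) (x v : 'rV[R]_n) : R := v 0 i.
Definition classicalRic (n : nat) (g : 'rV[R]_n -> 'M[R]_n) (a b : 'I_n)
  : 'rV[R]_n -> R :=
  ric (@coordE n) (@coordTh n) (fun a b c => chris g a b c)
      (coordE a) (coordE b).

Definition riemannian_on (n : nat) (U : set 'rV[R]_n) (g : 'rV[R]_n -> 'M[R]_n) :=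
  (forall a b, smooth_on U (fun x => g x a b)) /\
  (forall x, U x -> (g x)^T = g x) /\
  (forall x, U x -> forall v : 'rV[R]_n, v != 0 -> 0 < (v *m g x *m v^T) 0 0).

Definition semiriemannian_on (n : nat) (U : set 'rV[R]_n) (g : 'rV[R]_n -> 'M[R]_n) :=
  (forall a b, smooth_on U (fun x => g x a b)) /\
  (forall x, U x -> (g x)^T = g x) /\
  (forall x, U x -> \det (g x) != 0).

Section Jet.
Variables (m n : nat).
Definition Pt := ('rV[R]_m * ('rV[R]_n * 'M[R]_(m, n)))%type.
(* adapted frame indices: inl a ~ d/dt^a, inr (inl i) ~ d/dx^i,
   inr (inr (a,i)) ~ d/dp^a_i *)
Definition Idx := ('I_m + ('I_n + ('I_m * 'I_n)))%type.

Variables (chi : 'I_m -> 'I_m -> 'I_m -> 'rV[R]_m -> R)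
          (gam : 'I_n -> 'I_n -> 'I_n -> 'rV[R]_n -> R)
          (mass e : R) (A : 'rV[R]_m * 'rV[R]_n -> 'M[R]_(m, n)).

Definition N2 (f : 'I_m) (r i : 'I_n) (z : Pt) : R :=
  let t := z.1 in let x := z.2.1 in let p := z.2.2 in
  \sum_s gam s r i x * (2 * e / mass * A (t, x) f s - p f s)
  - e / mass * (derive (fun y => A (t, y) f r) x (deltar i)
                + derive (fun y => A (t, y) f i) x (deltar r)).

Definition adaptedE (al : Idx) (z : Pt) : Pt :=
  match al with
  | inl a => (deltar a, (0, \matrix_(f, r) - \sum_g chi f a g z.1 * z.2.2 g r))
  | inr (inl i) => (0, (deltar i, \matrix_(f, r) - N2 f r i z))
  | inr (inr (f, r)) => (0, (0, delta_mx f r))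
  end.

Definition adaptedTh (al : Idx) (z v : Pt) : R :=
  match al with
  | inl a => v.1 0 a
  | inr (inl i) => v.2.1 0 i
  | inr (inr (f, r)) => v.2.2 f r + \sum_a (\sum_g chi f a g z.1 * z.2.2 g r) * v.1 0 a
                        + \sum_i N2 f r i z * v.2.1 0 i
  end.

Definition GammaD (a b c : Idx) (z : Pt) : R :=
  match a, b, c with
  | inl a', inl b', inl c' => chi a' b' c' z.1
  | inr (inr (b0, j0)), inr (inr (f, j)), inl c' =>
      if j0 == j then chi b0 f c' z.1 else 0
  | inr (inl i), inr (inl j), inr (inl k) => gam i j k z.2.1
  | inr (inr (b0, i)), inr (inr (b, s)), inr (inl k) =>
      if b0 == b then - gam s i k z.2.1 else 0
  | _, _, _ => 0
  end.

Definition RicD (al be : Idx) : Pt -> R :=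
  ric adaptedE adaptedTh GammaD (adaptedE al) (adaptedE be).
End Jet.
End Generic.

(* Main.v *)
Require Import Defs.
From HB Require Import structures.
From mathcomp Require Import all_boot all_order all_algebra.
From mathcomp Require Import all_classical all_reals all_analysis.
From mathcomp Require Import ring.
Import Order.TTheory GRing.Theory Num.Theory.
Import numFieldNormedType.Exports.
Local Open Scope classical_set_scope.
Local Open Scope ring_scope.
Set Implicit Arguments. Unset Strict Implicit.


Section Gen.
Variable R : realType.
Variables (V : normedModType R) (I : finType).
Variables (E : I -> V -> V) (th : I -> V -> V -> R) (G : I -> I -> I -> V -> R).
Hypothesis Hdual : forall a b y, th a y (E b y) = (a == b)%:R.
Hypothesis HD : forall a y u v, th a y (u + v) = th a y u + th a y v.
Hypothesis HZ : forall a y k v, th a y (k *: v) = k * th a y v.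

Lemma th0 a y : th a y 0 = 0.
Proof. by rewrite -(scale0r (0:V)) HZ mul0r. Qed.

Lemma thS a y (F : I -> V) : th a y (\sum_b F b) = \sum_b th a y (F b).
Proof. exact: (big_morph _ (HD a y) (th0 a y)). Qed.

Lemma sum_delta (W : lmodType R) (c0 : I) (F : I -> W) :
  \sum_c (c == c0)%:R *: F c = F c0.
Proof.
rewrite (bigD1 c0) //= eqxx scale1r big1 ?addr0 // => c /negbTE ->.
by rewrite scale0r.
Qed.

Lemma sum_deltaR (c0 : I) (F : I -> R) :
  \sum_c (c == c0)%:R * F c = F c0.
Proof. exact: (@sum_delta R^o). Qed.

Lemma coefE a y (c : I -> R) : th a y (\sum_b c b *: E b y) = c a.
Proof.
rewrite thS; under eq_bigr do rewrite HZ Hdual.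
rewrite (bigD1 a) //= eqxx mulr1 big1 ?addr0 // => b /negbTE.
by rewrite eq_sym => ->; rewrite mulr0.
Qed.

Lemma cov_frame c0 b0 :
  cov E th G (E c0) (E b0) = fun y => \sum_a G a b0 c0 y *: E a y.
Proof.
apply: funext => y; rewrite /cov.
under eq_bigr => c _.
  rewrite Hdual.
  under eq_bigr => b _.
    have -> : (fun y0 => th b y0 (E b0 y0)) = cst (b == b0)%:R.
      by apply: funext => y0; rewrite Hdual.
    rewrite /vact derive_cst scale0r add0r Hdual.
  over.
over.
by rewrite /= sum_delta sum_delta.
Qed.

Lemma cov_frame2 c1 c0 b0 y :
  cov E th G (E c1) (cov E th G (E c0) (E b0)) y =
  \sum_b (vact (E c1) (G b b0 c0) y *: E b y
          + G b b0 c0 y *: \sum_a G a b c1 y *: E a y).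
Proof.
rewrite /cov; under eq_bigr do rewrite Hdual.
rewrite sum_delta; apply: eq_bigr => b _.
have -> : (fun y0 => th b y0 (cov E th G (E c0) (E b0) y0)) = G b b0 c0.
  by apply: funext => y0; rewrite cov_frame coefE.
by rewrite -[X in th b y X]/(cov E th G (E c0) (E b0) y) cov_frame coefE.
Qed.

Lemma th_cov2 a c1 c0 b0 y :
  th a y (cov E th G (E c1) (cov E th G (E c0) (E b0)) y) =
  vact (E c1) (G a b0 c0) y + \sum_b G b b0 c0 y * G a b c1 y.
Proof.
rewrite cov_frame2 thS; under eq_bigr do rewrite HD; rewrite big_split /=; congr (_ + _).
  under eq_bigr do rewrite HZ Hdual.
  by rewrite (bigD1 a) //= eqxx mulr1 big1 ?addr0 // => b /negbTE;
     rewrite eq_sym => ->; rewrite mulr0.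
by apply: eq_bigr => b _; rewrite HZ coefE.
Qed.

Variable z : V.
Hypothesis Hlie : forall c1 c0 b0 a c,
  th c z (lie (E c1) (E c0) z) * G a b0 c z = 0.

Lemma th_covlie a c1 c0 b0 :
  th a z (cov E th G (lie (E c1) (E c0)) (E b0) z) = 0.
Proof.
rewrite /cov thS big1 // => c _.
rewrite HZ thS.
under eq_bigr => b _.
  have -> : (fun y0 => th b y0 (E b0 y0)) = cst (b == b0)%:R.
    by apply: funext => y0; rewrite Hdual.
  rewrite /vact derive_cst scale0r add0r Hdual HZ.
over.
rewrite /= sum_deltaR coefE.
by rewrite Hlie.
Qed.

Lemma ric_frame b1 b0 :
  ric E th G (E b1) (E b0) z =
  \sum_a (vact (E a) (G a b0 b1) z + \sum_b G b b0 b1 z * G a b a z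
          - (vact (E b1) (G a b0 a) z + \sum_b G b b0 a z * G a b b1 z)).
Proof.
rewrite /ric; apply: eq_bigr => a _.
rewrite /curv.
have HB : forall u v, th a z (u - v) = th a z u - th a z v.
  by move=> u v; rewrite HD -scaleN1r HZ mulN1r.
by rewrite !HB th_cov2 th_cov2 th_covlie subr0.
Qed.
End Gen.


Section J.
Variable (R : realType) (m n : nat).
Variables (chi : 'I_m -> 'I_m -> 'I_m -> 'rV[R]_m -> R)
          (gam : 'I_n -> 'I_n -> 'I_n -> 'rV[R]_n -> R)
          (mass e : R) (A : 'rV[R]_m * 'rV[R]_n -> 'M[R]_(m, n)).
Notation E := (adaptedE chi gam mass e A).
Notation th := (adaptedTh chi gam mass e A).
Notation G := (GammaD chi gam).

Lemma pt0 : (point : Pt R m n) = 0.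
Proof. congr (_,(_,_)); apply/matrixP => i j; rewrite !mxE //. Qed.

Lemma dr_sum k (F : 'I_k -> R) b : \sum_a F a * deltar R b 0 a = F b.
Proof.
rewrite (bigD1 b) //= big1 ?addr0; first by rewrite /deltar mxE !eqxx mulr1.
by move=> a /negbTE nab; rewrite /deltar mxE nab andbF mulr0.
Qed.

Lemma z_sum k (F : 'I_k -> R) : \sum_a F a * (0 : 'rV[R]_k) 0 a = 0.
Proof. by rewrite big1 // => a _; rewrite mxE mulr0. Qed.

Lemma Jdual a b y : th a y (E b y) = (a == b)%:R.
Proof.
case: a => [a|[i|[f r]]]; case: b => [b|[j|[f' r']]] /=; rewrite ?mxE /= ?dr_sum ?z_sum ?addr0 //.
- by rewrite addrC subrr.
- by rewrite addrC subrr.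
Qed.

Lemma JD a y u v : th a y (u + v) = th a y u + th a y v.
Proof.
case: a => [a|[i|[f r]]] /=; rewrite ?mxE //.
under eq_bigr do rewrite mxE mulrDr.
under [X in _ + _ + X = _]eq_bigr do rewrite mxE mulrDr.
rewrite !big_split /=. ring.
Qed.

Lemma JZ a y k v : th a y (k *: v) = k * th a y v.
Proof.
case: a => [a|[i|[f r]]] /=; rewrite ?mxE //.
under eq_bigr do rewrite mxE mulrCA.
under [X in _ + _ + X = _]eq_bigr do rewrite mxE mulrCA.
rewrite -!mulr_sumr. ring.
Qed.

Lemma fst_cont (F : set_system (Pt R m n)) (l : Pt R m n) {FF : Filter F} : F --> l -> (fst @ F) --> l.1.
Proof. move=> Fl. apply: cvg_trans (cvg_app fst Fl) _. exact: cvg_fst. Qed.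
Lemma snd_cont (F : set_system (Pt R m n)) (l : Pt R m n) {FF : Filter F} : F --> l -> ((fun x => x.2.1) @ F) --> l.2.1.
Proof. move=> Fl. have := cvg_app snd Fl. move=> H. have H2 : snd @ F --> l.2.
 apply: cvg_trans H _. exact: cvg_snd.
apply: cvg_trans (cvg_app fst H2) _. exact: cvg_fst. Qed.

Lemma dfst0 (F : Pt R m n -> Pt R m n) z v :
  (forall y, (F y).1 = (F z).1) ->
  @fst 'rV[R]_m ('rV[R]_n * 'M[R]_(m, n)) (derive F z v) = 0.
Proof.
move=> Hc; rewrite /derive.
set q := (fun h : R => _).
case: (pselect (cvg (q @ 0^'))) => [cq|ncq].
  have H1 := fst_cont cq.
  have H2 : fst @ (q @ 0^') --> (0 : 'rV[R]_m).
    have -> : fst @ (q @ 0^') = (fst \o q) @ 0^' by [].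
    have -> : fst \o q = (fun _ : R => (0 : 'rV[R]_m)).
      apply: funext => h; rewrite /q /= Hc subrr scaler0 //.
    exact: cvg_cst.
  have PF : ProperFilter (fst @ (q @ 0^')).
    have P0 : ProperFilter (0 : R)^' by exact: Proper_dnbhs_numFieldType.
    have P1 : ProperFilter (q @ 0^') by exact: (fmap_proper_filter q P0).
    exact: (fmap_proper_filter fst P1).
  have FQ : Filter (q @ 0^') by apply: fmap_filter; exact: dnbhs_filter.
  exact: (@norm_cvg_unique _ _ _ PF _ _ (H1 FQ) H2).
rewrite /lim dvg_inP; first by rewrite pt0.
exact: ncq.
Qed.

Lemma dsnd0 (F : Pt R m n -> Pt R m n) z v :
  (forall y, (F y).2.1 = (F z).2.1) ->
  @fst 'rV[R]_n 'M[R]_(m, n) (@snd 'rV[R]_m ('rV[R]_n * 'M[R]_(m, n)) (derive F z v)) = 0.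
Proof.
move=> Hc; rewrite /derive.
set q := (fun h : R => _).
case: (pselect (cvg (q @ 0^'))) => [cq|ncq].
  have H1 := snd_cont cq.
  have H2 : (fun x => x.2.1) @ (q @ 0^') --> (0 : 'rV[R]_n).
    have -> : (fun x => x.2.1) @ (q @ 0^') = ((fun x => x.2.1) \o q) @ 0^' by [].
    have -> : (fun x => x.2.1) \o q = (fun _ : R => (0 : 'rV[R]_n)).
      apply: funext => h; rewrite /q /= Hc subrr scaler0 //.
    exact: cvg_cst.
  have PF : ProperFilter ((fun x => x.2.1) @ (q @ 0^')).
    have P0 : ProperFilter (0 : R)^' by exact: Proper_dnbhs_numFieldType.
    have P1 : ProperFilter (q @ 0^') by exact: (fmap_proper_filter q P0).
    exact: (fmap_proper_filter (fun x => x.2.1) P1).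
  have FQ : Filter (q @ 0^') by apply: fmap_filter; exact: dnbhs_filter.
  exact: (@norm_cvg_unique _ _ _ PF _ _ (H1 FQ) H2).
rewrite /lim dvg_inP; first by rewrite pt0.
exact: ncq.
Qed.

Lemma Gvert a b p y : G a b (inr (inr p)) y = 0.
Proof. by case: a => [?|[?|[??]]]; case: b => [?|[?|[??]]]; case: p. Qed.

Lemma Jlie z c1 c0 b0 a c : th c z (lie (E c1) (E c0) z) * G a b0 c z = 0.
Proof.
case: c => [c|[k|[f r]]].
- rewrite /adaptedTh /lie.
  have H0 : forall b y, (E b y).1 = (E b z).1 by case=> [?|[?|[??]]].
  have F1 : forall u v : Pt R m n, (u - v).1 = u.1 - v.1 by [].
  have D0 := @dfst0 (E c0) z (E c1 z) (H0 c0).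
  have D1 := @dfst0 (E c1) z (E c0 z) (H0 c1).
  rewrite F1; move: D0 D1.
  generalize (derive (E c0) z (E c1 z)) (derive (E c1) z (E c0 z)).
  by move=> d0 d1 -> ->; rewrite subrr mxE mul0r.
- rewrite /adaptedTh /lie.
  have H0 : forall b y, (E b y).2.1 = (E b z).2.1 by case=> [?|[?|[??]]].
  have F1 : forall u v : Pt R m n, (u - v).2.1 = u.2.1 - v.2.1 by [].
  have D0 := @dsnd0 (E c0) z (E c1 z) (H0 c0).
  have D1 := @dsnd0 (E c1) z (E c0 z) (H0 c1).
  rewrite F1; move: D0 D1.
  generalize (derive (E c0) z (E c1 z)) (derive (E c1) z (E c0 z)).
  by move=> d0 d1 -> ->; rewrite subrr mxE mul0r.
- by rewrite Gvert mulr0.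
Qed.
Lemma derive_ext (V W : normedModType R) (f : V -> R) (g : W -> R) x y v w :
  (forall h : R, f (h *: v + x) = g (h *: w + y)) -> f x = g y ->
  derive f x v = derive g y w.
Proof.
move=> H1 H2; rewrite /derive.
have -> : (fun h : R => h^-1 *: ((f \o shift x) (h *: v) - f x)) =
          (fun h : R => h^-1 *: ((g \o shift y) (h *: w) - g y)).
  by apply: funext => h /=; rewrite H1 H2.
by [].
Qed.

Lemma Gdep a b c y : G a b c y = G a b c (y.1, (y.2.1, 0)).
Proof.
by case: a => [?|[?|[??]]]; case: b => [?|[?|[??]]]; case: c => [?|[?|[??]]].
Qed.

Variable z : Pt R m n.

Definition DD (d a b c : Idx m n) : R :=
  match d with
  | inl a' => derive (fun t => G a b c (t, z.2)) z.1 (deltar R a')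
  | inr (inl i) => derive (fun x => G a b c (z.1, (x, z.2.2))) z.2.1 (deltar R i)
  | inr (inr _) => 0
  end.

Lemma vactE d a b c : vact (E d) (G a b c) z = DD d a b c.
Proof.
rewrite /vact; case: d => [a'|[i|[f r]]] /=.
- apply: derive_ext => [h|]; last by rewrite [LHS]Gdep [RHS]Gdep.
  by rewrite [LHS]Gdep [RHS]Gdep /= scaler0 add0r.
- apply: derive_ext => [h|]; last by rewrite [LHS]Gdep [RHS]Gdep.
  by rewrite [LHS]Gdep [RHS]Gdep /= scaler0 add0r.
- rewrite (@derive_ext _ _ _ (fun _ : Pt R m n => G a b c z) z z _ (E (inr (inr (f, r))) z)) ?derive_cst //.
  by move=> h; rewrite [LHS]Gdep [RHS]Gdep /= !scaler0 !add0r.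
Qed.
Lemma sumIdx (F : Idx m n -> R) : \sum_a F a =
  \sum_a F (inl a) + \sum_i F (inr (inl i)) + \sum_f \sum_r F (inr (inr (f, r))).
Proof.
rewrite big_sumType big_sumType /= addrA; congr (_ + _).
rewrite pair_bigA; by apply: eq_bigr => -[f r].
Qed.

Lemma s0l k (F : 'I_k -> R) : \sum_i 0 * F i = 0.
Proof. by rewrite big1 // => i _; rewrite mul0r. Qed.
Lemma s0r k (F : 'I_k -> R) : \sum_i F i * 0 = 0.
Proof. by rewrite big1 // => i _; rewrite mulr0. Qed.
Lemma ss0l k l (F : 'I_k -> 'I_l -> R) : \sum_i \sum_j 0 * F i j = 0.
Proof. by rewrite big1 // => i _; rewrite s0l. Qed.
Lemma ss0r k l (F : 'I_k -> 'I_l -> R) : \sum_i \sum_j F i j * 0 = 0.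
Proof. by rewrite big1 // => i _; rewrite s0r. Qed.

Definition TJ al be a := vact (E a) (G a be al) z + \sum_b G b be al z * G a b a z
  - (vact (E al) (G a be a) z + \sum_b G b be a z * G a b al z).

Definition Tc k (Ga : 'I_k -> 'I_k -> 'I_k -> 'rV[R]_k -> R) x b1 b0 a :=
  derive (Ga a b0 b1) x (deltar R a) + \sum_b Ga b b0 b1 x * Ga a b a x
  - (derive (Ga a b0 a) x (deltar R b1) + \sum_b Ga b b0 a x * Ga a b b1 x).

Definition target (al be a : Idx m n) : R :=
  match al, be, a with
  | inl b1, inl b0, inl a' => Tc chi z.1 b1 b0 a'
  | inr (inl j1), inr (inl j0), inr (inl i) => Tc gam z.2.1 j1 j0 i
  | _, _, _ => 0
  end.

Lemma TJE al be a : TJ al be a = target al be a.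
Proof.
rewrite /TJ !vactE.
case: al => [b1|[j1|[f1 r1]]]; case: be => [b0|[j0|[f0 r0]]]; case: a => [a|[i|[f r]]];
  rewrite /= !sumIdx /= ?s0l ?s0r ?ss0l ?ss0r ?mul0r ?mulr0 ?derive_cst ?addr0 ?add0r ?subrr //.
all: by rewrite ?big1_eq ?oppr0 ?subr0 ?addr0.
Qed.
End J.



Section Fin.
Variable R : realType.

Lemma classic_formula k (Ga : 'I_k -> 'I_k -> 'I_k -> 'rV[R]_k -> R) b1 b0 x :
  ric (@coordE R k) (@coordTh R k) Ga (coordE b1) (coordE b0) x =
  \sum_a Tc Ga x b1 b0 a.
Proof.
have Hd : forall (a b : 'I_k) (y : 'rV[R]_k), coordTh a y (coordE b y) = (a == b)%:R.
  by move=> a b y; rewrite /coordTh /coordE /deltar /= mxE.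
have HD : forall (a : 'I_k) (y u v : 'rV[R]_k), coordTh a y (u + v) = coordTh a y u + coordTh a y v.
  move=> a y u v; rewrite /coordTh.
  by change (((u + v : 'rV[R]_k) 0 a) = u 0 a + v 0 a); rewrite mxE.
have HZ : forall (a : 'I_k) (y : 'rV[R]_k) (c : R) (v : 'rV[R]_k), coordTh a y (c *: v) = c * coordTh a y v.
  move=> a y c v; rewrite /coordTh.
  by change (((c *: v : 'rV[R]_k) 0 a) = c * v 0 a); rewrite mxE.
have Hl : forall c1 c0 d0 a c : 'I_k,
    coordTh c x (lie (coordE c1) (coordE c0) x) * Ga a d0 c x = 0.
  move=> c1 c0 d0 a c; rewrite /lie /coordE.
  rewrite !derive_cst subrr /coordTh.
  by rewrite -[X in X * _]/((0 : 'rV[R]_k) 0 c) mxE mul0r.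
rewrite (ric_frame Hd HD HZ Hl); apply: eq_bigr => a _.
by [].
Qed.

Lemma RicD_formula m n chi gam mass e A (al be : Idx m n) (z : Pt R m n) :
  RicD chi gam mass e A al be z =
  match al, be with
  | inl b1, inl b0 => \sum_a Tc chi z.1 b1 b0 a
  | inr (inl j1), inr (inl j0) => \sum_i Tc gam z.2.1 j1 j0 i
  | _, _ => 0
  end.
Proof.
rewrite /RicD (ric_frame (@Jdual R m n chi gam mass e A) (@JD R m n chi gam mass e A)
   (@JZ R m n chi gam mass e A) (@Jlie R m n chi gam mass e A z)).
rewrite (eq_bigr _ (fun a _ => @TJE R m n chi gam mass e A z al be a)).
rewrite sumIdx.
by case: al => [b1|[j1|[f1 r1]]]; case: be => [b0|[j0|[f0 r0]]];
  rewrite /= ?big1_eq ?addr0 ?add0r.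
Qed.
End Fin.

Theorem mainTheorem3 (R : realType) (m n : nat)
  (UT : set 'rV[R]_m) (UM : set 'rV[R]_n)
  (h : 'rV[R]_m -> 'M[R]_m) (phi : 'rV[R]_n -> 'M[R]_n)
  (mass e : R) (A : 'rV[R]_m * 'rV[R]_n -> 'M[R]_(m, n)) :
  open UT -> open UM ->
  riemannian_on UT h -> semiriemannian_on UM phi ->
  mass != 0 ->
  (forall f i, smooth_on (UT `*` UM) (fun tx => A tx f i)) ->
  forall (z : Pt R m n), UT z.1 -> UM z.2.1 ->
  forall al be : Idx m n,
    RicD (chris h) (chris phi) mass e A al be z =
    match al, be with
    | inl a, inl b => classicalRic h a b z.1
    | inr (inl i), inr (inl j) => classicalRic phi i j z.2.1
    | _, _ => 0
    end.
Proof.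
move=> _ _ _ _ _ _ z _ _ al be.
rewrite RicD_formula.
case: al => [b1|[j1|[f1 r1]]]; case: be => [b0|[j0|[f0 r0]]] //.
- by rewrite /classicalRic classic_formula.
- by rewrite /classicalRic classic_formula.
Qed.
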